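(* (1) For every $\lambda$-term $M$, $(M^v)^\flat=M$. (2) For every $M\in\,!\Lambda^v$ and $U\in\,!\Lambda^v_{val}$ and variable $x$, $M\{U/x\}\in\,!\Lambda^v$ and $(M\{U/x\})^\flat=M^\flat\{U^\flat/x\}$. (3) For every $M\in\,!\Lambda^v$ and $T\in\,!\Lambda$, if $M\to_b T$ then $T\in\,!\Lambda^v$ and either $M^\flat=T^\flat$ or $M^\flat\to_{\beta_v}T^\flat$.
   Context: Bang calculus. The set $!\Lambda$ of terms is $T,S ::= x \mid \lambda x.T \mid T\,S \mid \mathrm{der}\,T \mid\ !T$; $\lambda$ the only binder, up to $\alpha$-conversion, $T\{S/x\}$ capture-avoiding substitution. Contexts: $C ::= [\cdot] \mid \lambda x.C \mid C\,T \mid T\,C \mid \mathrm{der}\,C \mid\ !C$. Root steps $(\lambda x.T)(!S)\mapsto_v T\{S/x\}$, $\mathrm{der}(!T)\mapsto_d T$; $\to_b$ is the closure of $\mapsto_v\cup\mapsto_d$ under contexts. $\lambda$-calculus: $M ::= V\mid MN$, values $V ::= x\mid\lambda x.M$; $\to_{\beta_v}$ is the closure of $(\lambda x.M)V\mapsto_{\beta_v}M\{V/x\}$ ($V$ a value) under $\lambda$-contexts $C ::= [\cdot]\mid\lambda x.C\mid C\,M\mid M\,C$. CbV translation: $x^v=\,!x$, $(\lambda x.M)^v=\,!(\lambda x.M^v)$, $(MN)^v=(\mathrm{der}\,M^v)\,N^v$. The subsets $!\Lambda^v$ and $!\Lambda^v_{val}$ of $!\Lambda$ are defined by mutual induction: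 $M,N ::=\ !U\mid(\mathrm{der}\,M)\,N\mid U\,M$ (elements of $!\Lambda^v$) and $U ::= x\mid\lambda x.M$ (elements of $!\Lambda^v_{val}$). The forgetful map $(\cdot)^\flat$ from $!\Lambda^v\cup\,!\Lambda^v_{val}$ to $\lambda$-terms: $(!U)^\flat=U^\flat$, $((\mathrm{der}\,M)N)^\flat=M^\flat N^\flat$, $(U\,M)^\flat=U^\flat M^\flat$, $x^\flat=x$, $(\lambda x.M)^\flat=\lambda x.M^\flat$. *)

(* Defs.v *)
(* Terms up to alpha-conversion are represented with
   de Bruijn indices; variables are natural numbers. *)
From Stdlib Require Import Arith.

Inductive bterm : Type :=
| BVar : nat -> bterm
| BLam : bterm -> bterm
| BApp : bterm -> bterm -> bterm
| BDer : bterm -> bterm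
| BBang : bterm -> bterm.

Inductive lterm : Type :=
| LVar : nat -> lterm
| LLam : lterm -> lterm
| LApp : lterm -> lterm -> lterm.

Definition upren (r : nat -> nat) : nat -> nat :=
  fun n => match n with 0 => 0 | S n => S (r n) end.

Fixpoint bren (r : nat -> nat) (t : bterm) : bterm :=
  match t with
  | BVar n => BVar (r n)
  | BLam t => BLam (bren (upren r) t)
  | BApp t s => BApp (bren r t) (bren r s)
  | BDer t => BDer (bren r t)
  | BBang t => BBang (bren r t)
  end.

Definition bup (s : nat -> bterm) : nat -> bterm :=
  fun n => match n with 0 => BVar 0 | S n => bren S (s n) end.

Fixpoint bsubst (s : nat -> bterm) (t : bterm) : bterm :=
  match t with
  | BVar n => s n
  | BLam t => BLam (bsubst (bup s) t)
  | BApp t u => BApp (bsubst s t) (bsubst s u)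
  | BDer t => BDer (bsubst s t)
  | BBang t => BBang (bsubst s t)
  end.

Fixpoint lren (r : nat -> nat) (t : lterm) : lterm :=
  match t with
  | LVar n => LVar (r n)
  | LLam t => LLam (lren (upren r) t)
  | LApp t s => LApp (lren r t) (lren r s)
  end.

Definition lup (s : nat -> lterm) : nat -> lterm :=
  fun n => match n with 0 => LVar 0 | S n => lren S (s n) end.

Fixpoint lsubst (s : nat -> lterm) (t : lterm) : lterm :=
  match t with
  | LVar n => s n
  | LLam t => LLam (lsubst (lup s) t)
  | LApp t u => LApp (lsubst s t) (lsubst s u)
  end.

(* T{S/x} for a free variable x: replace x by S, leave other variables alone *)
Definition bsubst1 (x : nat) (S : bterm) : nat -> bterm :=
  fun n => if Nat.eqb n x then S else BVar n.
Definition lsubst1 (x : nat) (S : lterm) : nat -> lterm :=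
  fun n => if Nat.eqb n x then S else LVar n.

(* beta-substitution: the body of a binder, bound variable (index 0)
   replaced by S, the other free variables shifted back down *)
Definition bscons (S0 : bterm) : nat -> bterm :=
  fun n => match n with 0 => S0 | Datatypes.S n => BVar n end.
Definition lscons (S0 : lterm) : nat -> lterm :=
  fun n => match n with 0 => S0 | Datatypes.S n => LVar n end.
Definition bbeta (T S : bterm) : bterm := bsubst (bscons S) T.
Definition lbeta (M V : lterm) : lterm := lsubst (lscons V) M.

Inductive broot : bterm -> bterm -> Prop :=
| broot_v T S : broot (BApp (BLam T) (BBang S)) (bbeta T S)
| broot_d T : broot (BDer (BBang T)) T.

Inductive bctx : Type :=
| BHole : bctx
| BCLam : bctx -> bctx
| BCAppL : bctx -> bterm -> bctx
| BCAppR : bterm -> bctx -> bctx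
| BCDer : bctx -> bctx
| BCBang : bctx -> bctx.

Fixpoint bplug (C : bctx) (t : bterm) : bterm :=
  match C with
  | BHole => t
  | BCLam C => BLam (bplug C t)
  | BCAppL C u => BApp (bplug C t) u
  | BCAppR u C => BApp u (bplug C t)
  | BCDer C => BDer (bplug C t)
  | BCBang C => BBang (bplug C t)
  end.

Definition bstep (T T' : bterm) : Prop :=
  exists C R R', broot R R' /\ T = bplug C R /\ T' = bplug C R'.

Definition is_value (M : lterm) : Prop :=
  match M with LVar _ => True | LLam _ => True | LApp _ _ => False end.

Inductive lroot : lterm -> lterm -> Prop :=
| lroot_bv M V : is_value V -> lroot (LApp (LLam M) V) (lbeta M V).

Inductive lctx : Type :=
| LHole : lctx
| LCLam : lctx -> lctx
| LCAppL : lctx -> lterm -> lctx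
| LCAppR : lterm -> lctx -> lctx.

Fixpoint lplug (C : lctx) (t : lterm) : lterm :=
  match C with
  | LHole => t
  | LCLam C => LLam (lplug C t)
  | LCAppL C u => LApp (lplug C t) u
  | LCAppR u C => LApp u (lplug C t)
  end.

Definition lstep (M M' : lterm) : Prop :=
  exists C R R', lroot R R' /\ M = lplug C R /\ M' = lplug C R'.

Fixpoint cbv (M : lterm) : bterm :=
  match M with
  | LVar x => BBang (BVar x)
  | LLam M => BBang (BLam (cbv M))
  | LApp M N => BApp (BDer (cbv M)) (cbv N)
  end.

Inductive in_bv : bterm -> Prop :=
| in_bv_bang U : in_bv_val U -> in_bv (BBang U)
| in_bv_der M N : in_bv M -> in_bv N -> in_bv (BApp (BDer M) N)
| in_bv_app U M : in_bv_val U -> in_bv M -> in_bv (BApp U M)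
with in_bv_val : bterm -> Prop :=
| in_bv_val_var x : in_bv_val (BVar x)
| in_bv_val_lam M : in_bv M -> in_bv_val (BLam M).

(* ---------- forgetful map; only meaningful on !Lambda^v u !Lambda^v_val
   (the BDer case and applications of other shapes are junk values) ---------- *)
Fixpoint flat (t : bterm) : lterm :=
  match t with
  | BVar x => LVar x
  | BLam M => LLam (flat M)
  | BBang U => flat U
  | BApp (BDer M) N => LApp (flat M) (flat N)
  | BApp U M => LApp (flat U) (flat M)
  | BDer M => flat M
  end.

(* Main.v *)
Require Import Defs.

Scheme in_bv_ind2 := Induction for in_bv Sort Prop
  with in_bv_val_ind2 := Induction for in_bv_val Sort Prop.
Combined Scheme in_bv_mut from in_bv_ind2, in_bv_val_ind2.

Lemma ren_bv : (forall M, in_bv M -> forall r, in_bv (bren r M)) /\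
               (forall U, in_bv_val U -> forall r, in_bv_val (bren r U)).
Proof.
  apply in_bv_mut; intros; simpl; constructor; auto.
Qed.

Lemma flat_ren : forall t r, flat (bren r t) = lren r (flat t).
Proof.
  induction t; intros r; simpl; try (f_equal; auto; fail).
  destruct t1; simpl in *; f_equal; auto.
Qed.

Lemma lsubst_ext : forall t s s', (forall n, s n = s' n) -> lsubst s t = lsubst s' t.
Proof.
  induction t; intros s s' H; simpl; f_equal; auto.
  apply IHt; intros [|n]; simpl; auto. rewrite H; auto.
Qed.

Lemma flat_app_val : forall V N, in_bv_val V -> flat (BApp V N) = LApp (flat V) (flat N).
Proof. intros V N H; destruct H; reflexivity. Qed.

Lemma subst_bv :
  (forall M, in_bv M -> forall s, (forall n, in_bv_val (s n)) ->
     in_bv (bsubst s M) /\ flat (bsubst s M) = lsubst (fun n => flat (s n)) (flat M)) /\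
  (forall U, in_bv_val U -> forall s, (forall n, in_bv_val (s n)) ->
     in_bv_val (bsubst s U) /\ flat (bsubst s U) = lsubst (fun n => flat (s n)) (flat U)).
Proof.
  apply in_bv_mut; intros.
  - destruct (H s H0). simpl. split; [constructor|]; auto.
  - destruct (H s H1), (H0 s H1). simpl. split; [constructor|]; auto.
    rewrite H3, H5. reflexivity.
  - destruct (H s H1), (H0 s H1). simpl bsubst.
    rewrite (flat_app_val _ _ H2), (flat_app_val _ _ i). split; [constructor|]; auto.
    simpl. rewrite H3, H5. reflexivity.
  - simpl. auto.
  - assert (Hb : forall n, in_bv_val (bup s n)).
    { intros [|n]; simpl. constructor. apply ren_bv, H0. }
    destruct (H _ Hb). simpl. split; [constructor|]; auto.
    f_equal. rewrite H2. apply lsubst_ext.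
    intros [|n]; simpl; auto. apply flat_ren.
Qed.

Definition fred a b := a = b \/ lstep a b.

Lemma fred_lam a b : fred a b -> fred (LLam a) (LLam b).
Proof.
  intros [->|(C&R&R'&H&->&->)]; [left; auto|right].
  exists (LCLam C), R, R'; auto.
Qed.
Lemma fred_appl a b c : fred a b -> fred (LApp a c) (LApp b c).
Proof.
  intros [->|(C&R&R'&H&->&->)]; [left; auto|right].
  exists (LCAppL C c), R, R'; auto.
Qed.
Lemma fred_appr a b c : fred a b -> fred (LApp c a) (LApp c b).
Proof.
  intros [->|(C&R&R'&H&->&->)]; [left; auto|right].
  exists (LCAppR c C), R, R'; auto.
Qed.

Lemma step_bv :
  (forall M, in_bv M -> forall C R R', broot R R' -> M = bplug C R ->
     in_bv (bplug C R') /\ fred (flat M) (flat (bplug C R'))) /\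
  (forall U, in_bv_val U -> forall C R R', broot R R' -> U = bplug C R ->
     in_bv_val (bplug C R') /\ fred (flat U) (flat (bplug C R'))).
Proof.
  apply in_bv_mut; intros.
  -
    destruct C; simpl in H1; inversion H1; subst.
    + inversion H0.
    + destruct (H C R R' H0 eq_refl). simpl. split; [constructor|]; auto.
  -
    destruct C; simpl in H2; inversion H2; subst.
    + inversion H1.
    + destruct C; simpl in H4; inversion H4; subst.
      * inversion H1; subst. inversion i as [? HT| |]; subst. simpl bplug.
        rewrite (flat_app_val _ _ HT). split; [constructor; auto|left; auto].
      * destruct (H C R R' H1 eq_refl). simpl. split; [constructor; auto|].
        apply fred_appl; auto.
    + destruct (H0 C R R' H1 eq_refl). simpl. split; [constructor; auto|].
      apply fred_appr; auto.
  -
    destruct C; simpl in H2; inversion H2; subst.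
    + inversion H1; subst. inversion i; subst. inversion i0; subst.
      assert (Hs : forall n, in_bv_val (bscons S n)).
      { intros [|n]; simpl; auto; constructor. }
      destruct (proj1 subst_bv _ H4 _ Hs) as [HA HB]. simpl bplug. unfold bbeta.
      split; auto.
      right. exists LHole, (LApp (LLam (flat T)) (flat S)), (lbeta (flat T) (flat S)).
      split; [constructor|split].
      * destruct H5; simpl; auto.
      * reflexivity.
      * rewrite HB. unfold lbeta. simpl. apply lsubst_ext.
        intros [|n]; reflexivity.
    + destruct (H C R R' H1 eq_refl). simpl bplug.
      rewrite (flat_app_val _ _ H3), (flat_app_val _ _ i).
      split; [constructor; auto|]. apply fred_appl; auto.
    + destruct (H0 C R R' H1 eq_refl). simpl bplug.
      rewrite (flat_app_val _ _ i), (flat_app_val _ _ i).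
      split; [constructor; auto|]. apply fred_appr; auto.
  - destruct C; simpl in H0; inversion H0; subst. inversion H.
  - destruct C; simpl in H1; inversion H1; subst.
    + inversion H0.
    + destruct (H C R R' H0 eq_refl). simpl. split; [constructor|]; auto.
      apply fred_lam; auto.
Qed.

Theorem mainTheorem9 :
  (forall M : lterm, flat (cbv M) = M) /\
  (forall (M U : bterm) (x : nat), in_bv M -> in_bv_val U ->
     in_bv (bsubst (bsubst1 x U) M) /\
     flat (bsubst (bsubst1 x U) M) = lsubst (lsubst1 x (flat U)) (flat M)) /\
  (forall (M T : bterm), in_bv M -> bstep M T ->
     in_bv T /\ (flat M = flat T \/ lstep (flat M) (flat T))).
Proof.
  split; [|split].
  - induction M; simpl; f_equal; auto.
  - intros M U x HM HU.
    assert (Hs : forall n, in_bv_val (bsubst1 x U n)).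
    { intros n; unfold bsubst1; destruct (Nat.eqb n x); auto; constructor. }
    destruct (proj1 subst_bv _ HM _ Hs). split; auto. rewrite H0.
    apply lsubst_ext. intros n; unfold bsubst1, lsubst1; destruct (Nat.eqb n x); auto.
  - intros M T HM (C&R&R'&H&->&->).
    apply (proj1 step_bv _ HM C R R' H eq_refl).
Qed.
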